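(* Let $k,\ell$ be positive integers. Then, as formal power series in $t$, \[ \sum_{c\ge0}\big(\operatorname{re}_k(\ell,c)-\operatorname{ro}_k(\ell,c)\big)\frac{t^{c}}{c!}=\exp\Big(\sum_{g\in G_k(\ell)}(-1)^{\ell g+1}\frac{\ell^{g-1}}{g}t^{g}\Big). \]
   Context: $G_k(\ell)=\{g\in\mathbb N:\gcd(g\ell,k)=g\}$. A permutation of cycle type $(\ell)^c$ is a permutation of an $\ell c$-element set whose disjoint cycle decomposition consists of exactly $c$ cycles, all of length $\ell$ (for $c=0$ it is the empty permutation). $\operatorname{re}_k(\ell,c)$ (resp. $\operatorname{ro}_k(\ell,c)$) denotes the number of even (resp. odd) permutations $\tau$ of the same $\ell c$-element set with $\tau^k=\sigma$, where $\sigma$ is any fixed permutation of cycle type $(\ell)^c$ (this number does not depend on the choice of $\sigma$). *)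

(* Defs.v *)
From HB Require Import structures.
From mathcomp Require Import all_boot all_order all_algebra all_fingroup.
Set Implicit Arguments. Unset Strict Implicit. Unset Printing Implicit Defensive.
Import Order.TTheory GRing.Theory Num.Theory.

Definition fps := nat -> rat.

Definition fps_mul (f g : fps) : fps :=
  fun n => (\sum_(i < n.+1) f i * g (n - i)%N)%R.

Definition fps_one : fps := fun n => if n == 0%N then 1%R else 0%R.

Fixpoint fps_pow (f : fps) (m : nat) : fps :=
  match m with 0 => fps_one | m'.+1 => fps_mul f (fps_pow f m') end.

(* exp(f) = sum_m f^m / m!, for f with zero constant term; then only the
   terms m <= n contribute to the coefficient of t^n. *)
Definition fps_exp (f : fps) : fps :=
  fun n => (\sum_(m < n.+1) fps_pow f m n / (m`!)%:R)%R.

Definition Gk (k l g : nat) : bool := gcdn (g * l) k == g.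

Definition Fseries (k l : nat) : fps :=
  fun g => if Gk k l g
           then ((-1) ^+ (l * g).+1 * (l ^ g.-1)%N%:R / g%:R)%R
           else 0%R.

Definition has_cycle_type (l c : nat) (T : finType) (s : {perm T}) : Prop :=
  #|porbits s| = c /\ forall x : T, #|porbit s x| = l.

Definition re_k (k : nat) (T : finType) (s : {perm T}) : nat :=
  #|[set t : {perm T} | (t ^+ k == s)%g && ~~ odd_perm t]|.
Definition ro_k (k : nat) (T : finType) (s : {perm T}) : nat :=
  #|[set t : {perm T} | (t ^+ k == s)%g && odd_perm t]|.

(* Main.v *)
Require Import Defs.
From HB Require Import structures.
From mathcomp Require Import all_boot all_order all_algebra all_fingroup.
From mathcomp Require Import zify ring.
From Stdlib Require Import Lia.
Import Order.TTheory GRing.Theory Num.Theory.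
Set Implicit Arguments. Unset Strict Implicit. Unset Printing Implicit Defensive.

Section Basic.
Local Open Scope group_scope.
Variable T : finType.
Implicit Types (s t : {perm T}) (x y : T).

Lemma permX_modE s x i : (s ^+ i) x = (s ^+ (i %% #|porbit s x|)) x.
Proof.
set n := #|porbit s x|.
rewrite {1}(divn_eq i n) expgD permM mulnC expgM.
have -> : ((s ^+ n) ^+ (i %/ n)) x = x.
  by apply: permX_fix; rewrite permX iter_porbit.
by [].
Qed.

Lemma permX_eqE s x i j :
  ((s ^+ i) x == (s ^+ j) x) = (i == j %[mod #|porbit s x|]).
Proof.
rewrite permX_modE (permX_modE s x j).
set n := #|porbit s x|.
have n0 : 0 < n by rewrite lt0n card_porbit_neq0.
have U := uniq_traject_porbit s x.
rewrite !permX -!(nth_traject s (ltn_pmod _ n0)) (nth_uniq x) // size_traject ltn_pmod //.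
Qed.

Lemma permX_fixE s x i : ((s ^+ i) x == x) = (#|porbit s x| %| i).
Proof.
have := permX_eqE s x i 0; rewrite expg0 perm1 => ->.
by rewrite mod0n /dvdn.
Qed.

End Basic.

Section Gen.
Local Open Scope group_scope.
Variable T : finType.
Implicit Types (s t u : {perm T}) (x y z : T).

Lemma permXS s i z : (s ^+ i.+1) z = s ((s ^+ i) z).
Proof. by rewrite expgSr permM. Qed.

Lemma permXSl s i z : (s ^+ i.+1) z = (s ^+ i) (s z).
Proof. by rewrite expgS permM. Qed.

Lemma agree_powX (P : pred T) t u :
  (forall z, P z -> P (u z)) -> (forall z, P z -> t z = u z) ->
  forall j z, P z -> (t ^+ j) z = (u ^+ j) z /\ P ((u ^+ j) z).
Proof.
move=> Pu Etu; elim=> [|j IH] z Pz; first by rewrite !expg0 !perm1.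
have [E1 P1] := IH z Pz.
by rewrite !permXS E1 Etu //; split=> //; apply: Pu.
Qed.

Lemma agree_pow (P : pred T) t u :
  (forall z, P z -> P (u z)) -> (forall z, P z -> t z = u z) ->
  forall j z, P z -> (t ^+ j) z = (u ^+ j) z.
Proof. by move=> Pu Etu j z Pz; case: (agree_powX Pu Etu j Pz). Qed.

Lemma porbit_stable t x z : (t z \in porbit t x) = (z \in porbit t x).
Proof.
have -> : t z = (t ^+ 1) z by rewrite expg1.
by rewrite porbit_sym porbit_perm porbit_sym.
Qed.

Lemma perm_onX (A : {set T}) t j : perm_on A t -> perm_on A (t ^+ j).
Proof.
move=> pt; elim: j => [|j IH]; first by rewrite expg0 perm_on1.
by rewrite expgS perm_onM.
Qed.

Definition rin_fun t x z := if z \in porbit t x then t z else z.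
Definition rout_fun t x z := if z \in porbit t x then z else t z.

Lemma rin_inj t x : injective (rin_fun t x).
Proof.
move=> a b; rewrite /rin_fun.
case: ifP => Ha; case: ifP => Hb.
- exact: perm_inj.
- by move=> E; move: Hb; rewrite -E porbit_stable Ha.
- by move=> E; move: Ha; rewrite E porbit_stable Hb.
- by [].
Qed.

Lemma rout_inj t x : injective (rout_fun t x).
Proof.
move=> a b; rewrite /rout_fun.
case: ifP => Ha; case: ifP => Hb.
- by [].
- by move=> E; move: Hb; rewrite -porbit_stable -E Ha.
- by move=> E; move: Ha; rewrite -porbit_stable E Hb.
- exact: perm_inj.
Qed.

Definition rin t x := perm (@rin_inj t x).
Definition rout t x := perm (@rout_inj t x).

Lemma rinE t x z : rin t x z = if z \in porbit t x then t z else z.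
Proof. by rewrite permE. Qed.
Lemma routE t x z : rout t x z = if z \in porbit t x then z else t z.
Proof. by rewrite permE. Qed.

End Gen.

Section Decomp.
Local Open Scope group_scope.
Variables (T : finType) (sigma : {perm T}) (k : nat).
Implicit Types (s t u : {perm T}) (x y z : T) (A : {set T}).

Definition Roots A := [set t : {perm T} | perm_on A t && [forall z in A, (t ^+ k) z == sigma z]].
Definition Cyc A x := [set t : {perm T} | [&& perm_on (porbit t x) t, porbit t x \subset A &
   [forall z in porbit t x, (t ^+ k) z == sigma z]]].
Definition sgn t : rat := ((-1) ^+ odd_perm t)%R.
Definition RR A : rat := (\sum_(t in Roots A) sgn t)%R.

Lemma RootsP A t : reflect (perm_on A t /\ forall z, z \in A -> (t ^+ k) z = sigma z) (t \in Roots A).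
Proof.
rewrite inE; apply: (iffP andP) => [[H /forall_inP F]|[H F]]; split => //.
  by move=> z /F /eqP.
by apply/forall_inP => z /F ->.
Qed.

Lemma CycP A x t : reflect [/\ perm_on (porbit t x) t, porbit t x \subset A &
   forall z, z \in porbit t x -> (t ^+ k) z = sigma z] (t \in Cyc A x).
Proof.
rewrite inE; apply: (iffP and3P) => [[H1 H2 /forall_inP F]|[H1 H2 F]]; split => //.
  by move=> z /F /eqP.
by apply/forall_inP => z /F ->.
Qed.

Section Pair.
Variables (A : {set T}) (x : T) (t1 t2 : {perm T}).
Hypotheses (h1 : t1 \in Cyc A x) (h2 : t2 \in Roots (A :\: porbit t1 x)).
Let S := porbit t1 x.

Lemma pair_in z : z \in S -> (t1 * t2) z = t1 z.
Proof.
move=> zS; rewrite permM; apply: (out_perm (proj1 (RootsP _ _ h2))).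
by rewrite inE porbit_stable zS.
Qed.

Lemma pair_out z : z \notin S -> (t1 * t2) z = t2 z.
Proof.
move=> zS; rewrite permM; have [H1 _ _] := CycP _ _ _ h1.
by rewrite (out_perm H1 zS).
Qed.

Lemma t2_out z : z \notin S -> t2 z \notin S.
Proof.
move=> zS; apply/negP => H.
have : t2 (t2 z) = t2 z.
  by apply: (out_perm (proj1 (RootsP _ _ h2))); rewrite inE H.
by move/perm_inj => E; rewrite -E H in zS.
Qed.

Lemma pair_powin j z : z \in S -> ((t1 * t2) ^+ j) z = (t1 ^+ j) z.
Proof.
move=> zS; apply: (agree_pow (P := mem S)) => //.
  by move=> w; rewrite /= porbit_stable.
by move=> w; apply: pair_in.
Qed.

Lemma pair_powout j z : z \notin S -> ((t1 * t2) ^+ j) z = (t2 ^+ j) z.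
Proof.
move=> zS; apply: (agree_pow (P := [pred w | w \notin S])) => //.
  by move=> w; apply: t2_out.
by move=> w; apply: pair_out.
Qed.

Lemma pair_orbit : porbit (t1 * t2) x = S.
Proof.
apply/setP => z; apply/porbitP/porbitP => -[j ->]; exists j.
  by rewrite pair_powin // porbit_id.
by rewrite pair_powin // porbit_id.
Qed.

Lemma pair_Roots : t1 * t2 \in Roots A.
Proof.
have [H1 H2 H3] := CycP _ _ _ h1; have [H4 H5] := RootsP _ _ h2.
apply/RootsP; split.
  apply/subsetP => z; rewrite inE => nz.
  case: (boolP (z \in S)) => zS; first exact: (subsetP H2).
  rewrite pair_out // in nz.
  have := (subsetP H4 z); rewrite inE => /(_ nz); rewrite inE; case/andP => _ //.
move=> z zA; case: (boolP (z \in S)) => zS.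
  by rewrite pair_powin // H3.
by rewrite pair_powout // H5 // inE zS.
Qed.

End Pair.

Lemma decomp A x : x \in A ->
  RR A = (\sum_(t1 in Cyc A x) sgn t1 * RR (A :\: porbit t1 x))%R.
Proof.
move=> xA.
rewrite /RR; symmetry.
under eq_bigr => t1 _ do rewrite big_distrr /=.
rewrite pair_big_dep /=.
set D := [set p : {perm T} * {perm T} | (p.1 \in Cyc A x) && (p.2 \in Roots (A :\: porbit p.1 x))].
have -> : (\sum_(p | (p.1 \in Cyc A x) && (p.2 \in Roots (A :\: porbit p.1 x))) sgn p.1 * sgn p.2)%R
   = (\sum_(p in D) sgn (p.1 * p.2))%R.
  apply: eq_big => p; first by rewrite /D in_set.
  by move=> _; rewrite /sgn odd_permM signr_addb.
have inD : forall p, (p \in D) = (p.1 \in Cyc A x) && (p.2 \in Roots (A :\: porbit p.1 x)).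
  by move=> p; rewrite /D in_set.
have inj : {in D &, injective (fun p : {perm T} * {perm T} => p.1 * p.2)}.
  move=> [a1 a2] [b1 b2]; rewrite !inD /= => /andP[ha1 ha2] /andP[hb1 hb2] E.
  have ES : porbit a1 x = porbit b1 x by rewrite -(pair_orbit ha2) E (pair_orbit hb2).
  have e1 : a1 = b1.
    apply/permP => z; case: (boolP (z \in porbit a1 x)) => zS.
      by rewrite -(pair_in ha2 zS) E (pair_in hb2) // -ES.
    have [H1 _ _] := CycP _ _ _ ha1; have [H1' _ _] := CycP _ _ _ hb1.
    by rewrite (out_perm H1 zS) (out_perm H1') // -ES.
  subst b1; congr pair.
  apply/permP => z; case: (boolP (z \in porbit a1 x)) => zS.
    have [H _] := RootsP _ _ ha2; have [H' _] := RootsP _ _ hb2.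
    by rewrite (out_perm H) ?(out_perm H') // inE zS.
  by rewrite -(pair_out a2 ha1 zS) E (pair_out b2 hb1 zS).
rewrite -(big_imset _ inj) /=.
apply: eq_bigl => t; apply/idP/idP.
  case/imsetP => -[a b]; rewrite inD /= => /andP[ha hb] ->.
  exact: (pair_Roots ha hb).
move=> tR; have [tA tF] := RootsP _ _ tR.
set S := porbit t x.
have orb1 : porbit (rin t x) x = S.
  apply/setP => z; apply/porbitP/porbitP => -[j ->]; exists j.
    apply: (agree_pow (P := mem S)) => //.
    - by move=> w; rewrite /= porbit_stable.
    - by move=> w /= wS; rewrite rinE wS.
    - exact: porbit_id.
  apply: esym; apply: (agree_pow (P := mem S)) => //.
  - by move=> w; rewrite /= porbit_stable.
  - by move=> w /= wS; rewrite rinE wS.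
  - exact: porbit_id.
have SA : S \subset A.
  apply/subsetP => z /porbitP[j ->].
  by rewrite (perm_closed _ (perm_onX j tA)).
apply/imsetP; exists (rin t x, rout t x).
  rewrite inD /=; apply/andP; split.
    apply/CycP; rewrite orb1; split => //.
      by apply/subsetP => z; rewrite inE rinE; case: ifP => // _; rewrite eqxx.
    move=> z zS; rewrite -tF ?(subsetP SA) //.
    apply: (agree_pow (P := mem S)) => //.
    - by move=> w; rewrite /= porbit_stable.
    - by move=> w /= wS; rewrite rinE wS.
  apply/RootsP; split.
    apply/subsetP => z; rewrite !inE routE orb1; case: ifP => zS; first by rewrite eqxx.
    move=> nz; rewrite andTb.
    by have := subsetP tA z; rewrite inE => /(_ nz).
  move=> z; rewrite inE orb1 => /andP[zS zA]; rewrite -tF //.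
  apply: (agree_pow (P := [pred w | w \notin S])) => //.
  - by move=> w; rewrite /= porbit_stable.
  - by move=> w /= wS; rewrite routE (negbTE wS).
apply/permP => z; rewrite permM rinE routE.
case: (boolP (z \in porbit t x)) => zS; first by rewrite porbit_stable zS.
by rewrite (negbTE zS).
Qed.

End Decomp.

Section FpsAlg.
Local Open Scope ring_scope.

Lemma fps_pow_coef (f : fps) N m n : (n <= N)%N ->
  fps_pow f m n = ((\poly_(i < N.+1) f i) ^+ m)`_n.
Proof.
elim: m n => [|m IH] n hn /=.
  by rewrite expr0 coef1 /fps_one; case: (n == 0%N).
rewrite exprS coefM /fps_mul; apply: eq_bigr => i _.
rewrite coef_poly IH ?(leq_trans (leq_subr _ _) hn) //.
have -> : (i < N.+1)%N by rewrite ltnS (leq_trans _ hn) // -ltnS.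
by [].
Qed.

Lemma fps_pow_small (f : fps) (f0 : f 0%N = 0) m n : (n < m)%N -> fps_pow f m n = 0.
Proof.
elim: m n => [|m IH] n // hn /=.
rewrite /fps_mul big1 // => -[[|i] hi] _ /=; first by rewrite f0 mul0r.
by rewrite IH ?mulr0 //; lia.
Qed.

Lemma fps_exp_ext (f : fps) (f0 : f 0%N = 0) n M : (n <= M)%N ->
  fps_exp f n = \sum_(m < M.+1) fps_pow f m n / (m`!)%:R.
Proof.
move=> hM; have hM' : (n.+1 <= M.+1)%N by [].
rewrite /fps_exp (big_ord_widen _ (fun m => fps_pow f m n / (m`!)%:R) hM') /=.
rewrite [RHS](bigID (fun m : 'I_M.+1 => (m < n.+1)%N)) /=.
rewrite [X in _ = _ + X]big1 ?addr0 // => i; rewrite -leqNgt => hi.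
by rewrite fps_pow_small ?mul0r.
Qed.

Lemma fps_exp_rec (f : fps) (f0 : f 0%N = 0) c :
  c%:R * fps_exp f c = \sum_(g < c.+1) (g%:R * f g) * fps_exp f (c - g)%N.
Proof.
case: c => [|N]; first by rewrite big_ord1 !mul0r.
set c := N.+1.
set p := \poly_(i < c.+1) f i.
set q := \sum_(m < c.+1) (((m`!)%:R)^-1 *: p ^+ m).
have Eq : forall j, (j <= c)%N -> fps_exp f j = q`_j.
  move=> j hj; rewrite (fps_exp_ext f0 hj) /q coef_sum; apply: eq_bigr => m _.
  by rewrite coefZ (fps_pow_coef _ _ hj) mulrC.
set q2 := \sum_(i < c) (((i`!)%:R)^-1 *: p ^+ i).
have Eq2 : forall j, (j <= N)%N -> fps_exp f j = q2`_j.
  move=> j hj; rewrite (fps_exp_ext f0 hj) /q2 coef_sum; apply: eq_bigr => m _.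
  by rewrite coefZ (fps_pow_coef _ _ (leq_trans hj (leqnSn N))) mulrC.
have Dq : q^`() = p^`() * q2.
  rewrite /q raddf_sum big_ord_recl /= derivZ deriv_exp mulr0n scaler0 add0r.
  rewrite /q2 big_distrr /=; apply: eq_bigr => i _.
  rewrite derivZ deriv_exp /= -scalerAr -scaler_nat scalerA; congr (_ *: _).
  rewrite factS natrM invfM mulrC mulrA mulfV ?mul1r //.
  by rewrite pnatr_eq0.
have Lq : c%:R * q`_c = (q^`())`_N by rewrite coef_deriv mulr_natl.
rewrite Eq // Lq Dq coefM.
rewrite [RHS]big_ord_recl /= mul0r mul0r add0r.
apply: eq_bigr => i _.
rewrite coef_deriv coef_poly ltnS (ltn_ord i) -Eq2 ?leq_subr //.
by rewrite mulr_natl /bump /= add1n subSS.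
Qed.

End FpsAlg.

Lemma mem_porbitX (T : finType) (t : {perm T}) x y i :
  y \in porbit t x -> ((t ^+ i)%g y \in porbit t x).
Proof. by rewrite -!eq_porbit_mem porbit_perm. Qed.

Lemma permXD (T : finType) (t : {perm T}) a b y : (t ^+ (a + b))%g y = (t ^+ b)%g ((t ^+ a)%g y).
Proof. by rewrite expgD permM. Qed.

Lemma porbit_fixed (T : finType) (t : {perm T}) z : t z = z -> porbit t z = [set z].
Proof.
move=> tz; apply/setP => y; rewrite inE; apply/porbitP/eqP => [[i ->]|->].
  exact: permX_fix.
by exists 0%N; rewrite expg0 perm1.
Qed.

Lemma card_porbits_cyc (T : finType) (t : {perm T}) x :
  perm_on (porbit t x) t -> #|porbits t| = (#|T| - #|porbit t x|).+1.
Proof.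
move=> pt; set S := porbit t x.
have -> : porbits t = S |: [set [set z] | z in ~: S].
  apply/setP => P; rewrite !inE; apply/imsetP/idP.
    case=> z _ ->; case: (boolP (z \in S)) => zS.
      by rewrite (eqP (_ : porbit t z == S)) ?eqxx // eq_porbit_mem.
    apply/orP; right; apply/imsetP; exists z; first by rewrite inE.
    by apply: porbit_fixed; apply: (out_perm pt).
  case/orP => [/eqP ->|/imsetP[z]]; first by exists x.
  rewrite inE => zS ->; exists z => //; apply: esym; apply: porbit_fixed.
  exact: (out_perm pt).
rewrite cardsU1 card_imset; last exact: set1_inj.
have -> : S \notin [set [set z] | z in ~: S].
  apply/imsetP => -[z]; rewrite inE => zS ES.
  by move: zS; rewrite ES set11.
by rewrite cardsCs setCK add1n.
Qed.

Lemma odd_perm_cyc (T : finType) (t : {perm T}) x :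
  perm_on (porbit t x) t -> odd_perm t = odd (#|porbit t x|).+1.
Proof.
move=> pt; rewrite /odd_perm (card_porbits_cyc pt).
have le : #|porbit t x| <= #|T| by rewrite max_card.
rewrite -{1}(subnK le) oddD /=.
by case: (odd _); case: (odd _).
Qed.

Section Cycles.
Variables (T : finType) (sigma : {perm T}) (k l : nat).
Hypotheses (hk : 0 < k) (hl : 0 < l) (horb : forall x, #|porbit sigma x| = l).

Section OneCyc.
Variables (A : {set T}) (x : T) (t : {perm T}).
Hypothesis (ht : t \in Cyc sigma k A x).

Lemma sig_pow j y : y \in porbit t x -> (sigma ^+ j)%g y = (t ^+ (k * j))%g y.
Proof.
have [_ _ F] := CycP _ _ _ _ _ ht.
move=> yS; elim: j => [|j IH]; first by rewrite muln0 !expg0 !perm1.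
by rewrite permXS IH -F ?mem_porbitX // -permXD mulnSr.
Qed.

Lemma cyc_struct : (#|porbit t x| = l * gcdn #|porbit t x| k /\
   gcdn (gcdn #|porbit t x| k * l) k = gcdn #|porbit t x| k)%N.
Proof.
set n := #|porbit t x|; set d := gcdn n k.
have key : forall j, (l %| j) = (n %| k * j).
  move=> j; rewrite -(horb x) -(permX_fixE sigma x j) sig_pow ?porbit_id //.
  by rewrite permX_fixE.
have n0 : 0 < n by rewrite lt0n card_porbit_neq0.
have d0 : 0 < d by rewrite gcdn_gt0 n0.
have En : n = d * (n %/ d) by rewrite mulnC divnK ?dvdn_gcdl.
have Ek : k = d * (k %/ d) by rewrite mulnC divnK ?dvdn_gcdr.
have cop : coprime (n %/ d) (k %/ d).
  rewrite /coprime -(eqn_pmul2l d0) muln_gcdr -En -Ek muln1 //.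
have key2 : forall j, (l %| j) = (n %/ d %| j).
  by move=> j; rewrite key {1}En {1}Ek -mulnA dvdn_pmul2l // Gauss_dvdr.
have Eld : l = n %/ d.
  by apply/eqP; rewrite eqn_dvd key2 dvdnn -key2 dvdnn.
split; first by rewrite Eld mulnC -En.
by rewrite Eld -En.
Qed.

Let g := gcdn #|porbit t x| k.

Lemma g_gt0 : 0 < g.
Proof. by rewrite gcdn_gt0 hk orbT. Qed.

Lemma g_dvdk : g %| k.
Proof. exact: dvdn_gcdr. Qed.

Lemma tg_pow u : (k %/ g * u = 1 %[mod l])%N -> (t ^+ g)%g x = (sigma ^+ u)%g x.
Proof.
move=> hu; rewrite sig_pow ?porbit_id //; apply/eqP; rewrite permX_eqE.
have [En _] := cyc_struct.
rewrite -/g En mulnC.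
have Ek : k = (g * (k %/ g))%N by rewrite mulnC divnK // g_dvdk.
rewrite {2}Ek -mulnA -!muln_modr hu muln_modr muln1.
by [].
Qed.

Lemma tpow_rec u i : (k %/ g * u = 1 %[mod l])%N -> (g <= i)%N ->
  (t ^+ i)%g x = (sigma ^+ u)%g ((t ^+ (i - g))%g x).
Proof.
move=> hu hi.
rewrite sig_pow ?mem_porbitX ?porbit_id // -permXD.
have -> : i = ((i - g) + g)%N by rewrite subnK.
rewrite subnK // -{1}(subnK hi) addnC permXD (tg_pow hu) sig_pow ?porbit_id //.
by rewrite -permXD addnC.
Qed.

Lemma orbits_distinct i j : (i < g)%N -> (j < g)%N ->
  porbit sigma ((t ^+ i)%g x) = porbit sigma ((t ^+ j)%g x) -> i = j.
Proof.
move=> ig jg E.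
have : (t ^+ j)%g x \in porbit sigma ((t ^+ i)%g x) by rewrite E porbit_id.
case/porbitP => a; rewrite sig_pow ?mem_porbitX ?porbit_id // -permXD => /eqP.
rewrite permX_eqE; have [En _] := cyc_struct; rewrite -/g in En.
move/eqP => Em.
have : (j = i + k * a %[mod g])%N.
  rewrite -(modn_dvdm _ (_ : g %| #|porbit t x|)) ?Em ?modn_dvdm //.
    by rewrite En dvdn_mull.
  by rewrite En dvdn_mull.
rewrite -(divnK g_dvdk) mulnAC addnC modnMDl => /eqP.
by rewrite !modn_small // => /eqP.
Qed.

End OneCyc.
Lemma inv_exists g : 0 < g -> gcdn (g * l) k = g ->
  exists u, (k %/ g * u = 1 %[mod l])%N.
Proof.
move=> g0 hg.
have dk : g %| k by rewrite -{1}hg dvdn_gcdr.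
have Ek : k = (g * (k %/ g))%N by rewrite mulnC divnK.
have k'0 : 0 < k %/ g by rewrite divn_gt0 // dvdn_leq.
have cop : coprime (k %/ g) l.
  rewrite /coprime gcdnC -(eqn_pmul2l g0) muln_gcdr -Ek hg muln1 //.
have [[a b] /= hab] := coprimeP _ k'0 cop.
exists a; rewrite mulnC.
have : (a * (k %/ g) = 1 + b * l)%N.
  have : (b * l < a * (k %/ g))%N by rewrite -subn_gt0 hab.
  move=> lt; rewrite -hab subnK //; exact: ltnW.
by move=> ->; rewrite addnC modnMDl.
Qed.

Lemma cyc_determined A x t t' : t \in Cyc sigma k A x -> t' \in Cyc sigma k A x ->
  gcdn #|porbit t x| k = gcdn #|porbit t' x| k ->
  (forall i, (i < gcdn #|porbit t x| k)%N -> (t ^+ i)%g x = (t' ^+ i)%g x) -> t = t'.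
Proof.
move=> ht ht' Eg E.
set g := gcdn #|porbit t x| k.
have g0 : 0 < g by rewrite gcdn_gt0 hk orbT.
have [_ hg] := cyc_struct ht.
have [u hu] := inv_exists g0 hg.
have hu' : (k %/ gcdn #|porbit t' x| k * u = 1 %[mod l])%N by rewrite -Eg.
have Eall : forall i, (t ^+ i)%g x = (t' ^+ i)%g x.
  elim/ltn_ind => i IH.
  case: (ltnP i g) => hi; first exact: E.
  rewrite (tpow_rec ht hu hi) (tpow_rec ht' hu') -?Eg //.
  rewrite IH // -/g; have := g0; lia.
have ES : porbit t x = porbit t' x.
  by apply/setP => z; apply/porbitP/porbitP => -[i ->]; exists i.
have [p1 _ _] := CycP _ _ _ _ _ ht; have [p2 _ _] := CycP _ _ _ _ _ ht'.
apply/permP => z; case: (boolP (z \in porbit t x)) => zS.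
  case/porbitP: zS => i ->.
  by rewrite -permXS Eall permXS -(Eall i).
by rewrite (out_perm p1 zS) (out_perm p2) // -ES.
Qed.

End Cycles.

Lemma next_nth_uniq (T : eqType) (p : seq T) x0 i : uniq p -> i < size p ->
  next p (nth x0 p i) = nth x0 p (i.+1 %% size p).
Proof.
move=> Up ip; rewrite next_nth mem_nth // index_uniq //.
case: p Up ip => [//|y p'] /= Up ip.
case: (ltngtP i.+1 (size p').+1) => h.
- by rewrite modn_small //= (set_nth_default y x0).
- by move: ip; rewrite ltnS => ip; move: h; rewrite ltnS ltnNge ip.
- by move: h => [->]; rewrite modnn /= nth_default.
Qed.

Section Construct.
Variables (T : finType) (sigma : {perm T}) (k l : nat).
Hypotheses (hk : 0 < k) (hl : 0 < l) (horb : forall x, #|porbit sigma x| = l).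
Variables (A : {set T}) (x : T) (g u : nat) (y : seq T).
Hypotheses (hA : forall z, z \in A -> sigma z \in A) (xA : x \in A) (g0 : 0 < g)
  (hg : gcdn (g * l) k = g) (hu : (k %/ g * u = 1 %[mod l])%N)
  (ysz : size y = g.-1) (yA : all (mem A) y) (yU : uniq (map (porbit sigma) (x :: y))).

Let ys r := nth x (x :: y) r.
Let f i := (sigma ^+ (u * (i %/ g)))%g (ys (i %% g)).
Let n := (l * g)%N.
Let Z := mkseq f n.

Lemma gk : g %| k.
Proof. by rewrite -hg dvdn_gcdr. Qed.

Lemma sigX_eq a b w : ((sigma ^+ a)%g w = (sigma ^+ b)%g w) <-> (a = b %[mod l]).
Proof.
have H := permX_eqE sigma w a b; rewrite horb in H.
by split => [E|E]; apply/eqP; [rewrite -H E | rewrite H; apply/eqP].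
Qed.

Lemma f_mod j : f (j %% n) = f j.
Proof.
rewrite /f /n modn_dvdm ?dvdn_mull //.
rewrite divn_modl ?dvdn_mull // mulnK //.
apply/sigX_eq.
by rewrite modnMmr.
Qed.

Lemma f_add i : f (i + k) = sigma (f i).
Proof.
rewrite /f -permXS.
have -> : (i + k) %% g = i %% g.
  by rewrite -(divnK gk) addnC modnMDl.
apply/sigX_eq.
have H1 : (u * (k %/ g) = 1 %[mod l])%N by rewrite mulnC hu.
by rewrite divnDr ?gk // mulnDr -modnDmr H1 modnDmr addn1.
Qed.

Lemma f_inj : {in gtn n &, injective f}.
Proof.
move=> i j; rewrite !inE /= => hi hj E.
have ig : i %% g < size (x :: y) by rewrite /= ysz prednK // ltn_pmod.
have jg : j %% g < size (x :: y) by rewrite /= ysz prednK // ltn_pmod.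
have Er : i %% g = j %% g.
  have : porbit sigma (f i) = porbit sigma (f j) by rewrite E.
  rewrite /f !porbit_perm /ys => Eo.
  apply/eqP; rewrite -(nth_uniq (porbit sigma x) _ _ yU) ?size_map //.
  by rewrite !(nth_map x) // Eo.
move: E; rewrite /f Er => /sigX_eq Eq.
have Eq2 : i %/ g = j %/ g %[mod l].
  rewrite -[i %/ g]mul1n -[j %/ g]mul1n -!(modnMml 1) -hu !modnMml -!mulnA.
  by rewrite -modnMmr Eq modnMmr.
have il : i %/ g < l by rewrite ltn_divLR.
have jl : j %/ g < l by rewrite ltn_divLR.
rewrite !modn_small // in Eq2.
by rewrite (divn_eq i g) (divn_eq j g) Eq2 Er.
Qed.

Lemma Z_uniq : uniq Z.
Proof. exact/mkseq_uniqP/f_inj. Qed.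

Lemma Z_size : size Z = n.
Proof. by rewrite size_mkseq. Qed.

Lemma n_gt0 : 0 < n.
Proof. by rewrite muln_gt0 hl g0. Qed.

Definition ctau := perm (can_inj (prev_next Z_uniq)).

Lemma ctauE z : ctau z = next Z z.
Proof. by rewrite permE. Qed.

Lemma ctau_pow i : (ctau ^+ i)%g x = nth x Z (i %% n).
Proof.
elim: i => [|i IH].
  rewrite expg0 perm1 mod0n nth_mkseq ?n_gt0 // /f div0n mod0n muln0 expg0 perm1.
  by [].
rewrite permXS IH ctauE next_nth_uniq ?Z_uniq ?Z_size ?ltn_pmod ?n_gt0 //.
by rewrite -addn1 modnDml addn1.
Qed.

Lemma ctau_nth i : i < n -> (ctau ^+ i)%g x = f i.
Proof. by move=> hi; rewrite ctau_pow modn_small // nth_mkseq. Qed.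

Lemma ctau_orbit : porbit ctau x = [set z | z \in Z].
Proof.
apply/setP => z; rewrite inE; apply/porbitP/idP => [[i ->]|zZ].
  by rewrite ctau_pow mem_nth // Z_size ltn_pmod // n_gt0.
exists (index z Z); rewrite ctau_pow modn_small ?nth_index // -Z_size index_mem //.
Qed.

Lemma ctau_card : #|porbit ctau x| = n.
Proof.
rewrite ctau_orbit -Z_size -(card_uniqP Z_uniq).
by apply: eq_card => z; rewrite inE.
Qed.

Lemma sigX_A a z : z \in A -> (sigma ^+ a)%g z \in A.
Proof. by elim: a => [|a IH] zA; rewrite ?expg0 ?perm1 // permXS hA // IH. Qed.

Lemma ctau_Cyc : ctau \in Cyc sigma k A x.
Proof.
apply/CycP; split.
- apply/subsetP => z; rewrite inE ctauE ctau_orbit inE => nz.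
  apply: contraR nz => zZ; rewrite next_nth (negbTE zZ) //.
- apply/subsetP => z; rewrite ctau_orbit inE => /mapP[i _ ->].
  apply: sigX_A; rewrite /ys.
  case: (i %% g) => [|r] //=.
  case: (ltnP r (size y)) => hr; first by apply: (allP yA); rewrite mem_nth.
  by rewrite nth_default.
- move=> z; case/porbitP => i ->.
  rewrite -permXD !ctau_pow.
  by rewrite !nth_mkseq ?ltn_pmod ?n_gt0 // !f_mod f_add.
Qed.

Lemma ctau_gcd : gcdn #|porbit ctau x| k = g.
Proof. by rewrite ctau_card /n mulnC hg. Qed.

Lemma ctau_init r : r < g -> (ctau ^+ r)%g x = nth x (x :: y) r.
Proof.
move=> rg; rewrite ctau_nth; last by rewrite /n (leq_trans rg) // leq_pmull.
by rewrite /f divn_small // modn_small // muln0 expg0 perm1.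
Qed.

End Construct.

Section Count.
Variables (T : finType) (sigma : {perm T}) (k l : nat).
Hypotheses (hk : 0 < k) (hl : 0 < l) (horb : forall x, #|porbit sigma x| = l).
Variables (A : {set T}) (x : T).
Hypotheses (hA : forall z, z \in A -> sigma z \in A) (xA : x \in A).

Definition Valid m := [set y : m.-tuple T | all (mem A) y && uniq (map (porbit sigma) (x :: y))].
Definition phi g (t : {perm T}) : (g.-1).-tuple T := [tuple (t ^+ (i.+1))%g x | i < g.-1].
Definition Cycg g := [set t in Cyc sigma k A x | gcdn #|porbit t x| k == g].

Lemma CycgE g t : (t \in Cycg g) = (t \in Cyc sigma k A x) && (gcdn #|porbit t x| k == g).
Proof. by rewrite /Cycg in_set. Qed.

Lemma ValidE m (y : m.-tuple T) : (y \in Valid m) = all (mem A) y && uniq (map (porbit sigma) (x :: y)).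
Proof. by rewrite /Valid in_set. Qed.

Lemma nth_phi g t j : j < g.-1 -> nth x (phi g t) j = (t ^+ j.+1)%g x.
Proof. by move=> hj; rewrite -[j]/(nat_of_ord (Ordinal hj)) nth_mktuple. Qed.

Lemma nth_xphi g t r : 0 < g -> r < g -> nth x (x :: phi g t) r = (t ^+ r)%g x.
Proof.
move=> g0; case: r => [|j] hr /=; first by rewrite expg0 perm1.
by rewrite nth_phi // -ltnS prednK.
Qed.

Lemma card_Cycg g : 0 < g -> gcdn (g * l) k = g -> #|Cycg g| = #|Valid g.-1|.
Proof.
move=> g0 hg.
have inj : {in Cycg g &, injective (phi g)}.
  move=> t t'; rewrite !CycgE => /andP[ht /eqP gt] /andP[ht' /eqP gt'] E.
  apply: (cyc_determined hk hl horb ht ht'); first by rewrite gt gt'.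
  move=> [|j]; first by rewrite !expg0.
  rewrite gt => hj; have hj' : j < g.-1 by rewrite -ltnS prednK.
  by rewrite -(nth_phi t hj') -(nth_phi t' hj') E.
rewrite -(card_in_imset inj); apply: eq_card => y; apply/imsetP/idP.
  case=> t; rewrite CycgE => /andP[ht /eqP gt] ->.
  rewrite ValidE; apply/andP; split.
    apply/(all_nthP x) => j; rewrite size_tuple => hj.
    rewrite nth_phi //; have [_ SA _] := CycP _ _ _ _ _ ht.
    by apply: (subsetP SA); apply: mem_porbit.
  have sz : size (x :: phi g t) = g.
    by rewrite -(prednK g0); congr S; exact: size_tuple.
  apply/(uniqP (porbit sigma x)) => i j; rewrite !inE size_map sz => hi hj.
  rewrite !(nth_map x) ?sz // !nth_xphi //.
  by apply: (orbits_distinct horb ht); rewrite gt.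
rewrite ValidE => /andP[yA yU].
have [u hu] := inv_exists hk g0 hg.
set t := ctau horb g0 hu (size_tuple y) yU.
exists t.
  rewrite CycgE; apply/andP; split; first exact: ctau_Cyc.
  by rewrite ctau_gcd.
apply: eq_from_tnth => i; rewrite tnth_mktuple ctau_init; last first.
  by have := ltn_ord i; lia.
  by []. by rewrite (tnth_nth x).
Qed.

Definition Ex (s : seq T) := [set z | porbit sigma z \in map (porbit sigma) s].

Lemma card_Ex s : uniq (map (porbit sigma) s) -> #|Ex s| = (l * size s)%N.
Proof.
elim: s => [|a s IH] /=.
  by move=> _; rewrite muln0; apply/eqP; rewrite cards_eq0; apply/eqP/setP => z; rewrite !inE.
case/andP => na U.
have -> : Ex (a :: s) = porbit sigma a :|: Ex s.
  by apply/setP => z; rewrite !inE eq_porbit_mem.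
rewrite cardsU IH // horb.
have -> : porbit sigma a :&: Ex s = set0.
  apply/setP => z; rewrite !inE; apply/negP => /andP[za zs].
  by move: na; rewrite -(eqP (_ : porbit sigma z == porbit sigma a)) ?zs // eq_porbit_mem.
by rewrite cards0 subn0 mulnS.
Qed.

Lemma porbit_sub a : a \in A -> porbit sigma a \subset A.
Proof.
move=> aA; apply/subsetP => z /porbitP[i ->].
by elim: i => [|i IH]; rewrite ?expg0 ?perm1 // permXS hA.
Qed.

Lemma Ex_sub s : all (mem A) s -> Ex s \subset A.
Proof.
move=> sA; apply/subsetP => z; rewrite inE => /mapP[a aS Ez].
have := porbit_id sigma z; rewrite Ez => /(subsetP (porbit_sub _)); apply.
exact: (allP sA).
Qed.

Lemma card_Valid m : #|Valid m| = \prod_(i < m) (#|A| - l * i.+1)%N.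
Proof.
elim: m => [|m IH].
  rewrite big_ord0; have -> : Valid 0 = setT.
    apply/setP => y; rewrite ValidE inE tuple0 /=; by [].
  by rewrite cardsT card_tuple expn0.
rewrite big_ord_recr -IH.
set Ext := fun y : m.-tuple T => A :\: Ex (x :: y).
set P := [set p : m.-tuple T * T | (p.1 \in Valid m) && (p.2 \in Ext p.1)].
have cardExt : forall y, y \in Valid m -> #|Ext y| = (#|A| - l * m.+1)%N.
  move=> y; rewrite ValidE => /andP[yA yU].
  by rewrite /Ext cardsDS ?Ex_sub /= ?xA ?yA // card_Ex // size_tuple.
have -> : Valid m.+1 = [set cons_tuple p.2 p.1 | p in P].
  apply/setP => w; rewrite ValidE; apply/idP/imsetP.
    case/tupleP: w => z y /andP[wA wU]; exists (y, z); last by apply/val_inj.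
    move: wA wU => /= /andP[zA yA]; rewrite !inE negb_or => /andP[/andP[nxz nxy] /andP[nzy yU]].
    rewrite /= yA zA nxy yU /= andbT; apply/negP => /orP[/eqP E|H]; [by move: nxz; rewrite E eqxx | by move/negP: nzy].
  case=> -[y z]; rewrite inE /= ValidE /Ext !inE => /andP[/andP[yA yU] /andP[nz zA]] ->.
  move: nz yU; rewrite /= !inE negb_or => /andP[nzx nzy] /andP[nxy yU].
  by rewrite zA yA nzy yU negb_or eq_sym nzx nxy.
rewrite card_in_imset; last first.
  move=> [y z] [y' z'] _ _ /(congr1 val) /= [-> /val_inj ->]; by [].
rewrite -sum1_card.
rewrite (eq_bigl (fun p => (p.1 \in Valid m) && (p.2 \in Ext p.1))); last first.
  by move=> p; rewrite /P in_set.
rewrite -(pair_big_dep (fun y => y \in Valid m) (fun y z => z \in Ext y) (fun _ _ => 1%N)) /= -sum_nat_const; apply: eq_bigr => y yV.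
by rewrite sum1_card cardExt.
Qed.

End Count.

Lemma prod_count (l c m : nat) :
  (\prod_(i < m) (l * c - l * i.+1) = l ^ m * (c.-1) ^_ m)%N.
Proof.
have -> : (l ^ m = \prod_(i < m) l)%N by rewrite prod_nat_const card_ord.
rewrite ffact_prod -big_split /=.
apply: eq_bigr => i _; rewrite -mulnBr; congr (_ * _); lia.
Qed.

Lemma term_id (k l c g : nat) (E : nat -> rat) : (0 < c)%N -> (g <= c)%N ->
  ((if (0 < g)%N && (gcdn (g * l) k == g) then \prod_(i < g.-1) (l * c - l * i.+1) else 0)%N%:R
    * ((-1) ^+ (l * g).+1 * ((c - g)`!%:R * E (c - g)%N)) =
  (c.-1)`!%:R * ((g%:R * Fseries k l g) * E (c - g)%N) :> rat)%R.
Proof.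
move=> c0 gc.
rewrite /Fseries /Gk.
case: (posnP g) => [->|g0] /=; first by rewrite !mul0r mulr0.
case: eqP => hg /=; last by rewrite !(mul0r, mulr0).
rewrite prod_count natrM.
have hf : ((c.-1) ^_ g.-1 * (c - g)`! = (c.-1)`!)%N.
  rewrite -(ffact_fact (_ : g.-1 <= c.-1)%N); last lia.
  by congr (_ * _`!)%N; lia.
rewrite -hf natrM natrX.
have gne : (g%:R : rat) != 0%R by rewrite pnatr_eq0 -lt0n.
rewrite [(g%:R * _)%R]mulrC -!mulrA mulKf //.
ring.
Qed.

Section Main.
Variables (T : finType) (sigma : {perm T}) (k l : nat).
Hypotheses (hk : (0 < k)%N) (hl : (0 < l)%N) (horb : forall x, #|porbit sigma x| = l).

Lemma sig_l z : (sigma ^+ l)%g z = z.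
Proof. by apply/eqP; rewrite permX_fixE horb. Qed.

Lemma Roots0 : Roots sigma k set0 = [set 1%g].
Proof.
apply/setP => t; rewrite [RHS]inE; apply/RootsP/eqP => [[pt _]|->].
  by apply: (perm_on_id pt); rewrite cards0.
by split => [|z]; [exact: perm_on1 | rewrite inE].
Qed.

Lemma gof_le A x t c : t \in Cyc sigma k A x -> #|A| = (l * c)%N ->
  (gcdn #|porbit t x| k <= c)%N.
Proof.
move=> ht cA; have [_ SA _] := CycP _ _ _ _ _ ht.
have [En _] := cyc_struct horb ht.
have le := subset_leq_card SA; rewrite cA {1}En leq_pmul2l // in le.
Qed.

Lemma card_Cycg_full (A : {set T}) (x : T) (c g : nat) : (forall z, z \in A -> sigma z \in A) -> x \in A ->
  #|A| = (l * c)%N ->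
  #|Cycg sigma k A x g| = (if (0 < g)%N && (gcdn (g * l) k == g)
      then \prod_(i < g.-1) (l * c - l * i.+1) else 0)%N.
Proof.
move=> hA xA cA.
case: ifP => [/andP[g0 /eqP hg]|nc].
  by rewrite (card_Cycg hk hl horb hA xA g0 hg) (card_Valid horb hA xA) cA.
apply/eqP; rewrite cards_eq0; apply/eqP/setP => t; rewrite in_set0 CycgE.
apply/negP => /andP[ht /eqP gt]; move: nc.
have [_ hg] := cyc_struct horb ht.
by rewrite -gt gcdn_gt0 hk orbT /= hg eqxx.
Qed.

Lemma main c : forall A : {set T}, (forall z, z \in A -> sigma z \in A) -> #|A| = (l * c)%N ->
  RR sigma k A = ((c`!)%:R * fps_exp (Fseries k l) c)%R.
Proof.
elim/ltn_ind: c => c IH A hA cA.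
case: (posnP c) => [c0|c0].
  subst c; move: cA; rewrite muln0 => /eqP; rewrite cards_eq0 => /eqP ->.
  rewrite /RR Roots0 big_set1 /sgn odd_perm1 expr0 /fps_exp big_ord1.
  by rewrite /= /fps_one /= fact0 divr1.
have [x xA] : exists x, x \in A.
  by apply/set0Pn; rewrite -card_gt0 cA muln_gt0 hl.
rewrite (decomp _ _ xA).
set E := fps_exp (Fseries k l).
set h := fun g : nat => ((-1) ^+ (l * g).+1 * ((c - g)`!%:R * E (c - g)%N) : rat)%R.
have term : forall t1, t1 \in Cyc sigma k A x ->
    (sgn t1 * RR sigma k (A :\: porbit t1 x) = h (gcdn #|porbit t1 x| k))%R.
  move=> t1 ht; set g := gcdn #|porbit t1 x| k.
  have [En hg] := cyc_struct horb ht; rewrite -/g in En hg.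
  have g0 : (0 < g)%N by rewrite gcdn_gt0 hk orbT.
  have gc : (g <= c)%N by apply: (gof_le ht cA).
  have [pt SA rt] := CycP _ _ _ _ _ ht.
  rewrite /sgn (odd_perm_cyc pt) signr_odd En.
  have Sclosed : forall j y, y \in porbit t1 x -> (sigma ^+ j)%g y \in porbit t1 x.
    by move=> j y yS; rewrite (sig_pow ht j yS) mem_porbitX.
  rewrite (IH (c - g)%N); first by rewrite /h mulnC.
  - lia.
  - move=> z; rewrite !inE => /andP[zS zA]; rewrite hA // andbT.
    apply: contra zS => szS.
    have := Sclosed l.-1 _ szS; rewrite -permXSl prednK // sig_l //.
  - by rewrite cardsDS // cA En mulnBr.
rewrite (eq_bigr (fun t1 => h (gcdn #|porbit t1 x| k))); last exact: term.
rewrite (partition_big (fun t => inord (gcdn #|porbit t x| k) : 'I_c.+1) predT) //=.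
rewrite (eq_bigr (fun j : 'I_c.+1 => (#|Cycg sigma k A x j|%:R * h j)%R)); last first.
  move=> j _.
  rewrite (eq_bigl (fun t => t \in Cycg sigma k A x j)); last first.
    move=> t; rewrite CycgE; case: (boolP (t \in Cyc sigma k A x)) => //= ht.
    rewrite -val_eqE /= inordK // ltnS; exact: (gof_le ht cA).
  rewrite (eq_bigr (fun _ => h j)); last first.
    by move=> t; rewrite CycgE => /andP[_ /eqP ->].
  by rewrite sumr_const mulr_natl.
have F0 : Fseries k l 0 = 0%R.
  by rewrite /Fseries /Gk mul0n gcd0n; case: eqP => // k0; move: hk; rewrite k0.
rewrite -(prednK c0) factS natrM -mulrA (prednK c0) mulrCA /E (fps_exp_rec F0) mulr_sumr.
apply: eq_bigr => j _.
rewrite (card_Cycg_full _ hA xA cA).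
by rewrite /h /E term_id // -ltnS.
Qed.
End Main.

Lemma RR_T (T : finType) (s : {perm T}) k :
  RR s k setT = ((re_k k s)%:R - (ro_k k s)%:R)%R.
Proof.
have RT : forall t, (t \in Roots s k setT) = (t ^+ k == s)%g.
  move=> t; apply/RootsP/eqP => [[_ F]|E].
    by apply/permP => z; apply: F; rewrite in_setT.
  split; first by apply/subsetP => z; rewrite inE.
  by move=> z _; rewrite E.
rewrite /RR (bigID (fun t => odd_perm t)) /= addrC.
congr (_ + _)%R.
  rewrite (eq_bigr (fun _ => 1%R)); last by move=> t /andP[_ /negbTE]; rewrite /sgn => ->.
  rewrite sumr_const /re_k; congr (_ *+ _)%R; apply: eq_card => t.
  by rewrite [in RHS]in_set -RT.
rewrite (eq_bigr (fun _ => (-1)%R)); last by move=> t /andP[_]; rewrite /sgn => ->.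
rewrite sumr_const /ro_k mulNrn; congr (- (_ *+ _))%R; apply: eq_card => t.
by rewrite [in RHS]in_set -RT.
Qed.

Theorem lemma2 (k l : nat) (hk : (0 < k)%N) (hl : (0 < l)%N)
  (sigma : forall c : nat, {perm 'I_(l * c)})
  (hsigma : forall c : nat, has_cycle_type l c (sigma c)) :
  forall c : nat,
    (((re_k k (sigma c))%:R - (ro_k k (sigma c))%:R) / (c`!)%:R : rat)%R
    = fps_exp (Fseries k l) c.
Proof.
move=> c; have [_ horb] := hsigma c.
have M := main hk hl horb (c := c) (A := setT) (fun z _ => in_setT _) (etrans (cardsT _) (card_ord _)).
rewrite -RR_T M mulrC mulKf //.
by rewrite pnatr_eq0 -lt0n fact_gt0.
Qed.
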